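(* Let $\Gamma=(V,E)$ be a simple graph of order $n$ and let $\lambda$ be the spectral radius of $\Gamma$. Then the global defensive alliance number of $\Gamma$ satisfies $$\gamma_{a}(\Gamma)\ge \left\lceil\frac{n}{\lambda+2}\right\rceil$$ and the global strong defensive alliance number of $\Gamma$ satisfies $$\gamma_{\hat{a}}(\Gamma)\ge \left\lceil\frac{n}{\lambda+1}\right\rceil.$$
   Context: For $S\subseteq V$ and $v\in V$, $N_S(v)=\{u\in S: u\sim v\}$ and $N_{V\setminus S}(v)=\{u\in V\setminus S: u\sim v\}$. A nonempty set $S\subseteq V$ is a defensive alliance if $|N_S(v)|+1\ge |N_{V\setminus S}(v)|$ for every $v\in S$, and a strong defensive alliance if $|N_S(v)|\ge |N_{V\setminus S}(v)|$ for every $v\in S$. A (strong) defensive alliance is global if it is a dominating set, i.e. every vertex of $V\setminus S$ is adjacent to some vertex of $S$. $\gamma_a(\Gamma)$ (resp. $\gamma_{\hat a}(\Gamma)$) is the minimum cardinality of a global defensive (resp. global strong defensive) alliance. The spectral radius is the largest eigenvalue of the adjacency matrix of $\Gamma$. *)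

(* Defs.v *)
From HB Require Import structures.
From mathcomp Require Import all_boot all_order all_algebra.
From mathcomp Require Import reals.
Set Implicit Arguments. Unset Strict Implicit. Unset Printing Implicit Defensive.
Import Order.TTheory GRing.Theory Num.Theory.
Local Open Scope ring_scope.

Definition simple_graph (n : nat) (e : rel 'I_n) : Prop :=
  symmetric e /\ irreflexive e.

Definition nbhd_in (n : nat) (e : rel 'I_n) (S : {set 'I_n}) (v : 'I_n) : {set 'I_n} :=
  [set u in S | e u v].

Definition defensive_alliance (n : nat) (e : rel 'I_n) (S : {set 'I_n}) : bool :=
  (S != set0) &&
  [forall v in S, #|nbhd_in e (~: S) v| <= #|nbhd_in e S v| + 1]%N.

Definition strong_defensive_alliance (n : nat) (e : rel 'I_n) (S : {set 'I_n}) : bool :=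
  (S != set0) &&
  [forall v in S, #|nbhd_in e (~: S) v| <= #|nbhd_in e S v|]%N.

Definition dominating (n : nat) (e : rel 'I_n) (S : {set 'I_n}) : bool :=
  [forall v in ~: S, [exists u in S, e u v]].

Definition global_defensive_alliance n (e : rel 'I_n) S :=
  defensive_alliance e S && dominating e S.
Definition global_strong_defensive_alliance n (e : rel 'I_n) S :=
  strong_defensive_alliance e S && dominating e S.

(* Minimum cardinality; the default n is attained by V itself whenever n > 0. *)
Definition gamma_a (n : nat) (e : rel 'I_n) : nat :=
  \big[minn/n]_(S : {set 'I_n} | global_defensive_alliance e S) #|S|.
Definition gamma_sa (n : nat) (e : rel 'I_n) : nat :=
  \big[minn/n]_(S : {set 'I_n} | global_strong_defensive_alliance e S) #|S|.

Definition adjacency_matrix (R : nzRingType) (n : nat) (e : rel 'I_n) : 'M[R]_n :=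
  \matrix_(i, j) (e i j)%:R.

Definition is_spectral_radius (R : realType) (n : nat) (e : rel 'I_n) (lam : R) : Prop :=
  eigenvalue (adjacency_matrix R e) lam /\
  forall mu : R, eigenvalue (adjacency_matrix R e) mu -> mu <= lam.

(* Main.v *)
Require Import Defs.
From HB Require Import structures.
From mathcomp Require Import all_boot all_order all_algebra.
From mathcomp Require Import reals.
From mathcomp.real_closed Require Import complex.
From mathcomp Require Import lra.
Import Order.TTheory GRing.Theory Num.Theory.
Local Open Scope ring_scope.

Section Spec.
Local Open Scope sesquilinear_scope.
Local Open Scope complex_scope.
Lemma eig_transfer (R : rcfType) n (A : 'M[R]_n) (a : R) :
  eigenvalue (map_mx (real_complex R) A) a%:C -> eigenvalue A a.
Proof.
by rewrite !eigenvalue_root_char -map_char_poly fmorph_root.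
Qed.

Lemma core_C (C : numClosedFieldType) n (A : 'M[C]_n) (l : C) :
  A \is hermsymmx ->
  (forall a, eigenvalue A a -> a \is Num.real -> a <= l) ->
  forall x : 'rV_n, (x *m A *m x ^t*) 0 0 <= l * (x *m x ^t*) 0 0.
Proof.
move=> Aher Hl x.
have Anorm := hermitian_normalmx Aher.
have dreal := hermitian_spectral_diag_real Aher.
move/orthomx_spectralP: Anorm.
set P := spectralmx A; set d := spectral_diag A => AE.
have Pu : P \is unitarymx by apply: spectral_unitarymx.
have Punit : P \in unitmx by apply: spectral_unit.
have PV : invmx P = P ^t* by apply: invmx_unitary.
have PPt : P ^t* *m P = 1%:M by rewrite -PV mulVmx.
have deig : forall i, eigenvalue A (d 0 i).
  move=> i; apply/eigenvalueP; exists (row i P).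
    rewrite -row_mul. rewrite {1}AE PV !mulmxA (unitarymxP Pu) mul1mx mul_diag_mx.
    by apply/rowP => j; rewrite !mxE.
  apply/negP => /eqP H0.
  have := congr1 (fun M => M *m invmx P) H0.
  rewrite mul0mx -row_mul mulmxV // => /rowP /(_ i).
  by rewrite !mxE eqxx /= => /eqP; rewrite oner_eq0.
have dle : forall i, d 0 i <= l.
  move=> i; apply: Hl => //; exact: (mxOverP dreal 0 i).
set y := x *m P ^t*.
have E1 : x *m A *m x ^t* = y *m diag_mx d *m y ^t*.
  rewrite AE PV /y trmx_mul map_mxM /= trmxCK.
  by rewrite !mulmxA.
have E2 : x *m x ^t* = y *m y ^t*.
  rewrite /y trmx_mul map_mxM /= trmxCK.
  by rewrite mulmxA -(mulmxA x) PPt mulmx1.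
rewrite E1 E2; clearbody y.
rewrite mul_mx_diag !mxE mulr_sumr; apply: ler_sum => i _.
rewrite !mxE -mulrA mulrCA [l * _]mulrC.
by rewrite mulrC -subr_ge0 -mulrBl mulr_ge0 ?mul_conjC_ge0 ?subr_ge0 ?dle.
Qed.


Lemma core_R (R : rcfType) n (A : 'M[R]_n) (l : R) :
  A^T = A -> (forall a, eigenvalue A a -> a <= l) ->
  forall x : 'rV_n, (x *m A *m x^T) 0 0 <= l * (x *m x^T) 0 0.
Proof.
move=> AT Hl x.
set f := real_complex R.
have fconj : forall r : R, Num.conj (f r) = f r.
  by move=> r; apply: conj_Creal; rewrite complex_real.
have conjmap : forall m k (M : 'M[R]_(m, k)), (map_mx f M) ^t* = map_mx f M^T.
  by move=> m k M; apply/matrixP => i j; rewrite !mxE fconj.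
have Aher : map_mx f A \is hermsymmx.
  apply/is_hermitianmxP; rewrite expr0 scale1r conjmap AT //.
have := @core_C _ _ _ (l%:C) Aher _ (map_mx f x).
have key : forall M : 'M[R]_1, (map_mx f M) 0 0 = f (M 0 0) by move=> M; rewrite mxE.
rewrite !conjmap -!map_mxM !key -rmorphM lecR; apply.
move=> a eA aR.
have aE : a = (complex.Re a)%:C by move: aR; case: a {eA} => ar ai; rewrite complex_real => /eqP ->.
rewrite aE lecR; apply: Hl; apply: eig_transfer; rewrite -aE //.
Qed.

End Spec.

Lemma quad_in (R : realType) n (e : rel 'I_n) (S : {set 'I_n}) :
  let x := \row_i ((i \in S)%:R : R) in
  (x *m adjacency_matrix R e *m x^T) 0 0 = (\sum_(v in S) #|nbhd_in e S v|)%:R.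
Proof.
move=> x; rewrite !mxE natr_sum [RHS]big_mkcond /=; apply eq_bigr => j _.
rewrite !mxE; case: (j \in S); rewrite ?mulr1 ?mulr0 //.
rewrite /nbhd_in -sum1_card natr_sum [RHS]big_mkcond /=. apply eq_bigr => i _.
by rewrite !mxE inE; case: (i \in S); case: (e i j); rewrite /= ?mulr1 ?mulr0 ?mul0r.
Qed.

Lemma quad_1 (R : realType) n (S : {set 'I_n}) :
  let x := \row_i ((i \in S)%:R : R) in
  (x *m x^T) 0 0 = #|S|%:R.
Proof.
move=> x; rewrite !mxE -sum1_card natr_sum [RHS]big_mkcond /=; apply eq_bigr => j _.
by rewrite !mxE; case: (j \in S); rewrite ?mulr1 ?mulr0.
Qed.

Lemma dom_bound n (e : rel 'I_n) (S : {set 'I_n}) :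
  symmetric e -> dominating e S ->
  (#|~: S| <= \sum_(v in S) #|nbhd_in e (~: S) v|)%N.
Proof.
move=> sym /forall_inP dom.
rewrite -sum1_card.
apply: (@leq_trans (\sum_(u in ~: S) \sum_(v in S) (e v u : nat))).
  apply: leq_sum => u uS; have /exists_inP [v vS evu] := dom u uS.
  by rewrite (bigD1 v) //= evu.
rewrite exchange_big /=; apply: leq_sum => v _.
rewrite /nbhd_in -sum1_card (eq_bigl (fun u => (u \in ~: S) && e u v)); last first.
  by move=> u; rewrite inE.
rewrite [X in (_ <= X)%N]big_mkcondr /=.
by apply: leq_sum => u _; rewrite sym; case: (e u v).
Qed.

Lemma ceil_bound (R : realType) (t : R) (n k : nat) :
  0 < t -> n%:R <= t * k%:R -> Num.ceil (n%:R / t) <= k%:Z.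
Proof.
move=> t0 H; rewrite ceil_le_int -pmulrn ler_pdivrMr // mulrC //.
Qed.

Lemma gamma_bound n (P : pred {set 'I_n}) (c : int) :
  c <= n%:Z -> (forall S, P S -> c <= #|S|%:Z) ->
  c <= (\big[minn/n]_(S | P S) #|S|)%:Z.
Proof.
move=> cn HS; apply: (big_ind (fun k : nat => c <= k%:Z)) => //.
by move=> a b ha hb; rewrite /minn; case: ltnP.
Qed.

Lemma sum_split_bound n (e : rel 'I_n) (S : {set 'I_n}) (b : nat) :
  (forall v, v \in S -> #|nbhd_in e (~: S) v| <= #|nbhd_in e S v| + b)%N ->
  (\sum_(v in S) #|nbhd_in e (~: S) v| <= \sum_(v in S) #|nbhd_in e S v| + b * #|S|)%N.
Proof.
move=> H; rewrite -sum1_card big_distrr /= muln1 -big_split /=.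
by apply: leq_sum => v vS; apply: H.
Qed.

Theorem theorem3 (R : realType) (n : nat) (e : rel 'I_n) (lam : R) :
  simple_graph e -> is_spectral_radius e lam ->
  (Num.ceil (n%:R / (lam + 2)) <= (gamma_a e)%:Z) /\
  (Num.ceil (n%:R / (lam + 1)) <= (gamma_sa e)%:Z).
Proof.
move=> [sym irr] [eig maxl].
have AT : (adjacency_matrix R e)^T = adjacency_matrix R e.
  by apply/matrixP => i j; rewrite !mxE sym.
have ray := @core_R R _ _ _ AT maxl.
have keyS : forall S : {set 'I_n},
    (\sum_(v in S) #|nbhd_in e S v|)%:R <= lam * #|S|%:R.
  move=> S; have := ray (\row_i ((i \in S)%:R : R)).
  by rewrite quad_in quad_1.
have n0 : (0 < n)%N.
  move/eigenvalueP: (eig) => [v _ vn0]; case: (posnP n) => // nz.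
  by subst n; move: vn0; rewrite (thinmx0 v) eqxx.
pose i0 := Ordinal n0.
have lam0 : 0 <= lam.
  have := keyS [set i0]; rewrite cards1 mulr1; apply: le_trans.
  exact: ler0n.
have cardn : forall S : {set 'I_n}, (#|S| + #|~: S| = n)%N.
  by move=> S; rewrite cardsC card_ord.
have part : forall (b : nat) (P : pred {set 'I_n}),
    (forall S, P S -> dominating e S /\
       (forall v, v \in S -> #|nbhd_in e (~:S) v| <= #|nbhd_in e S v| + b)%N) ->
    Num.ceil (n%:R / (lam + b.+1%:R)) <= (\big[minn/n]_(S | P S) #|S|)%:Z.
  move=> b P HP.
  have t0 : 0 < lam + b.+1%:R by apply: ltr_wpDl.
  apply: gamma_bound.
    apply: ceil_bound => //.
    rewrite -[X in X <= _]mul1r ler_wpM2r // -lerBlDl.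
    by rewrite -natr1; have := ler0n R b; lra.
  move=> S /HP [dom def]; apply: ceil_bound => //.
  have h1 := @dom_bound n e S sym dom.
  have h2 := @sum_split_bound n e S b def.
  have h3 : (n <= \sum_(v in S) #|nbhd_in e S v| + b * #|S| + #|S|)%N.
    apply: leq_trans (eq_leq (esym (cardn S))) _.
    rewrite addnC leq_add2r; exact: leq_trans h1 h2.
  have := keyS S.
  move: h3; rewrite -(ler_nat R) !natrD natrM => h3 h4.
  apply: (le_trans h3); rewrite -natr1 mulrDl mulrDl mul1r; lra.
split.
  apply: (part 1%N) => S; rewrite /global_defensive_alliance /defensive_alliance => /andP [/andP [_ /forall_inP Hd] dom]; by split.
apply: (part 0%N) => S; rewrite /global_strong_defensive_alliance /strong_defensive_alliance => /andP [/andP [_ /forall_inP Hd] dom]; split => // v vS; rewrite addn0; exact: Hd.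
Qed.
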